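(* Let $n$ be a positive integer and $k$ an integer with $0\le k\le n$. Then $$e_k\left(\left\{\sin^2\left(\tfrac{(2j-1)\pi}{4n}\right) : j=1,\dots,n\right\}\right) = \frac{2n\,4^{-k}(2n-k-1)!}{k!\,(2n-2k)!}.$$
   Context: $e_k(\alpha_1,\dots,\alpha_n)$ denotes the degree-$k$ elementary symmetric function of $\alpha_1,\dots,\alpha_n$ (with $e_0=1$). *)

(* Defs.v *)
From HB Require Import structures.
From mathcomp Require Import all_boot all_order all_algebra.
From mathcomp Require Import all_classical all_reals all_analysis.
Set Implicit Arguments. Unset Strict Implicit. Unset Printing Implicit Defensive.
Import Order.TTheory GRing.Theory Num.Theory.
Local Open Scope ring_scope.

Definition elem_sym (R : comRingType) (n k : nat) (a : 'I_n -> R) : R :=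
  \sum_(A : {set 'I_n} | #|A| == k) \prod_(i in A) a i.

(* Main.v *)
Require Import Defs.
From HB Require Import structures.
From mathcomp Require Import all_boot all_order all_algebra.
From mathcomp Require Import all_classical all_reals all_analysis.
From mathcomp Require Import ring lra zify.
Import Order.TTheory GRing.Theory Num.Theory.
Local Open Scope ring_scope.
Definition qp (R : nzRingType) (m : nat) : {poly R} :=
  \poly_(k < m.+1) ((- 4%:R) ^+ k * ('C(m + k - 1, 2 * k))%:R).

Lemma coef_qp (R : nzRingType) m k : (qp R m)`_k = (- 4%:R) ^+ k * ('C(m + k - 1, 2 * k))%:R.
Proof.
rewrite coef_poly; case: ltnP => // H.
by rewrite bin_small ?mulr0 //; lia.
Qed.

Lemma bin_id N k : ('C(N.+2, k.*2.+2) + 'C(N, k.*2.+2) = 2 * 'C(N.+1, k.*2.+2) + 'C(N, k.*2))%N.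
Proof. rewrite !binS; lia. Qed.

Lemma qp_rec (R : comNzRingType) m :
  qp R m.+2 = 2%:R *: qp R m.+1 - 4%:R *: ('X * qp R m.+1) - qp R m.
Proof.
apply/polyP => k; rewrite !(coefB, coefZ, coefXM, coef_qp).
case: k => [|k] /=.
  rewrite !muln0 !bin0 !expr0 !mul1r; ring.
have E := bin_id (m + k) k.
have -> : (m.+2 + k.+1 - 1 = (m + k).+2)%N by lia.
have -> : (m.+1 + k.+1 - 1 = (m + k).+1)%N by lia.
have -> : (m + k.+1 - 1 = (m + k))%N by lia.
have -> : (m.+1 + k - 1 = (m + k))%N by lia.
have -> : (2 * k.+1 = k.*2.+2)%N by lia.
have -> : (2 * k = k.*2)%N by lia.
have E' : ('C((m + k).+2, k.*2.+2))%:R = (2 * 'C((m + k).+1, k.*2.+2) + 'C(m + k, k.*2))%:R - ('C(m + k, k.*2.+2))%:R :> R.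
  by rewrite -E natrD addrK.
rewrite E' natrD natrM exprS; ring.
Qed.
Lemma qp01 (R : nzRingType) m : (m <= 1)%N -> qp R m = 1.
Proof.
move=> hm; apply/polyP => k; rewrite coef_qp coefC.
case: k => [|k]; first by rewrite muln0 bin0 expr0 mul1r.
by rewrite bin_small ?mulr0 //; lia.
Qed.

Lemma cosDB (R : realType) (a b : R) : cos (a + b) + cos (a - b) = 2%:R * cos a * cos b.
Proof. rewrite cosD cosB; ring. Qed.

Lemma qp_cos (R : realType) m (x : R) :
  (qp R m).[sin x ^+ 2] * cos x = cos ((2 * m)%:R * x - x).
Proof.
suff : forall m, (qp R m).[sin x ^+ 2] * cos x = cos ((2 * m)%:R * x - x) /\
                 (qp R m.+1).[sin x ^+ 2] * cos x = cos ((2 * m.+1)%:R * x - x).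
  by move=> /(_ m) [].
elim=> [|j [IH1 IH2]].
  rewrite !qp01 // hornerC !mul1r; split.
    by rewrite muln0 mul0r sub0r cosN.
  by congr cos; ring.
split => //.
rewrite qp_rec (mulrC (polyX R)) !(hornerD, hornerN, hornerZ, hornerMX).
have c2 : cos (x *+ 2) = 1 - 2%:R * sin x ^+ 2.
  rewrite cos_mulr2n cos2sin2; ring.
have := @cosDB R ((2 * j.+1)%:R * x - x) (x *+ 2).
rewrite c2.
have -> : (2 * j.+1)%:R * x - x + x *+ 2 = (2 * j.+2)%:R * x - x by ring.
have -> : (2 * j.+1)%:R * x - x - x *+ 2 = (2 * j)%:R * x - x by ring.
rewrite -IH1 -IH2 => H.
have -> : cos ((2 * j.+2)%:R * x - x) =
    2%:R * ((qp R j.+1).[sin x ^+ 2] * cos x) * (1 - 2%:R * sin x ^+ 2)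
     - (qp R j).[sin x ^+ 2] * cos x.
  by rewrite -H; ring.
ring.
Qed.
Lemma vieta (R : comNzRingType) m (a : 'I_m -> R) k : (k <= m)%N ->
  (\prod_(i < m) ('X - (a i)%:P))`_(m - k) = (-1) ^+ k * elem_sym k a.
Proof.
move=> km.
under eq_bigr => i _ do rewrite addrC -raddfN/=.
rewrite bigA_distr /= coef_sum.
transitivity (\sum_(I : {set 'I_m}) if #|I| == k then \prod_(i < m | i \in I) - a i else 0).
  apply eq_bigr => I _.
  rewrite big_if/= big_const iter_mulr_1 -rmorph_prod/= coefCM coefXn.
  have h : (#|I| + #|(fun i : 'I_m => i \notin I)| = m)%N.
    by rewrite (cardC I) card_ord.
  have -> : ((m - k)%N == #|(fun i : 'I_m => i \notin I)|) = (#|I| == k) by apply/eqP/eqP; lia.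
  by case: ifP; rewrite ?mulr1 ?mulr0.
rewrite -big_mkcond /elem_sym mulr_sumr /=; apply: eq_bigr => I /eqP <-.
by rewrite prodrN.
Qed.
Lemma key (R : fieldType) n (s : 'I_n -> R) (T : {poly R}) :
  injective s -> (forall i, root T (s i)) -> (size T <= n.+1)%N -> T`_n != 0 ->
  forall k, (k <= n)%N -> T`_(n - k) = T`_n * ((-1) ^+ k * elem_sym k s).
Proof.
move=> inj rt sT Tn k kn.
have h1 : all (root T) [seq s i | i <- index_enum 'I_n].
  by apply/allP => z /mapP [i _ ->].
have h2 : uniq_roots [seq s i | i <- index_enum 'I_n].
  by rewrite uniq_rootsE (map_inj_uniq inj) index_enum_uniq.
have [q hq] := uniq_roots_prod_XsubC h1 h2.
rewrite big_map in hq.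
change (T = q * \prod_(i < n) ('X - (s i)%:P)) in hq.
set P := \prod_(i < n) ('X - (s i)%:P) in hq.
have Pm : P \is monic by exact: monic_prod_XsubC.
have sP : size P = n.+1 by rewrite size_prod_XsubC [index_enum _]unlock -enumT size_enum_ord.
have T0 : T != 0 by apply: contraNneq Tn => ->; rewrite coef0.
have q0 : q != 0 by apply: contraNneq T0 => q0; rewrite hq q0 mul0r.
have sq : (size q <= 1)%N.
  have := size_Mmonic q0 Pm; rewrite -hq sP addnS /= => e; rewrite e in sT; lia.
have hq' := size1_polyC sq.
have cT j : T`_j = q`_0 * P`_j by rewrite hq {1}hq' coefCM.
have Pn : P`_n = 1 by have := monicP Pm; rewrite lead_coefE sP.
by rewrite !cT Pn mulr1 vieta.
Qed.
Lemma nat_id2 b k' :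
  (('C((b + k').+1, b) + 'C(b + k', b)) * (k'.+1`! * b`!) = ((b + k').+2 + k') * (b + k')`!)%N.
Proof.
have h1 := @bin_fact (b + k').+1 b (leqW (leq_addr _ _)).
have h2 := @bin_fact (b + k') b (leq_addr _ _).
have e1 : ((b + k').+1 - b = k'.+1)%N by lia.
have e2 : ((b + k') - b = k')%N by lia.
rewrite e1 in h1; rewrite e2 in h2.
rewrite factS in h1; rewrite factS.
rewrite factS in h1.
nia.
Qed.

Lemma nat_id n k : (0 < n)%N -> (k <= n)%N ->
  (('C(2*n - k, 2*(n-k)) + 'C(2*n-k-1, 2*(n-k))) * (k`! * (2*n - 2*k)`!) = 2*n * (2*n-k-1)`!)%N.
Proof.
move=> hn hk; case: k hk => [|k'] hk.
  have -> : (2 * n - 2 * 0 = 2 * n)%N by lia.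
  have -> : (2 * (n - 0) = 2 * n)%N by lia.
  rewrite binn bin_small; last by lia.
  rewrite fact0 !mul1n ?addn0 ?subn0.
  have e : (2 * n = (2 * n - 1).+1)%N by lia.
  by rewrite [in LHS]e factS -e.
have -> : (2 * (n - k'.+1) = 2 * n - 2 * k'.+1)%N by lia.
have -> : (2 * n - k'.+1 - 1 = (2 * n - 2 * k'.+1 + k'))%N by lia.
have -> : (2 * n - k'.+1 = (2 * n - 2 * k'.+1 + k').+1)%N by lia.
rewrite nat_id2; congr (_ * _)%N; lia.
Qed.
Lemma cos_half_odd (R : realType) (i : nat) : cos (pi / 2 + i%:R * pi) = 0 :> R.
Proof.
elim: i => [|i IH]; first by rewrite mul0r addr0 cos_pihalf.
have -> : pi / 2 + i.+1%:R * pi = (pi / 2 + i%:R * pi) + pi :> R by ring.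
by rewrite cosDpi IH oppr0.
Qed.

Theorem mainTheorem6 (R : realType) (n k : nat) (hn : (0 < n)%N) (hk : (k <= n)%N) :
  elem_sym k (fun i : 'I_n => sin ((2 * i + 1)%:R * pi / (4 * n)%:R) ^+ 2)
  = (2 * n)%:R * (4%:R ^- k) * ((2 * n - k - 1)`!)%:R
      / ((k`!)%:R * ((2 * n - 2 * k)`!)%:R) :> R.
Proof.
pose th (i : 'I_n) : R := (2 * i + 1)%:R * pi / (4 * n)%:R.
have n0 : n%:R != 0 :> R by rewrite pnatr_eq0 -lt0n.
have pi0 : 0 < pi :> R := pi_gt0 R.
have thr i : 0 < th i < pi / 2.
  apply/andP; split.
    by rewrite /th divr_gt0 ?mulr_gt0 ?ltr0n //; lia.
  have h : (2 * i + 1)%:R < (2 * n)%:R :> R by rewrite ltr_nat; have := ltn_ord i; lia.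
  have -> : th i = ((2 * i + 1)%:R / (2 * n)%:R) * (pi / 2).
    by rewrite /th !natrM; field.
  rewrite gtr_pMl ?divr_gt0 // ltr_pdivrMr ?mul1r //.
  by rewrite ltr0n; lia.
have cth i : 0 < cos (th i).
  by apply: cos_gt0_pihalf; have := thr i; lra.
have c2n i : cos ((2 * n)%:R * th i) = 0.
  have -> : (2 * n)%:R * th i = pi / 2 + (nat_of_ord i)%:R * pi.
    by rewrite /th !natrM natrD natrM; field.
  exact: cos_half_odd.
set s := (fun i : 'I_n => _).
have sE i : s i = sin (th i) ^+ 2 by [].
set T := qp R n.+1 + qp R n.
have rT i : root T (s i).
  apply/rootP; rewrite hornerD sE.
  apply: (mulIf (negbT (gt_eqF (cth i)))).
  rewrite mul0r mulrDl !qp_cos.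
  have -> : (2 * n.+1)%:R * th i - th i = (2 * n)%:R * th i + th i by ring.
  by rewrite cosDB c2n mulr0 mul0r.
have inj : injective s.
  move=> i j; rewrite !sE => /pexpIrn.
  have s0 l : 0 <= sin (th l) by apply: sin_ge0_pi; have := thr l; lra.
  move=> /(_ isT) /(_ (s0 i) (s0 j)).
  have inI l : th l \in `[(- (pi / 2)), pi / 2].
    by rewrite in_itv /=; have := thr l; lra.
  move=> /(sin_inj (inI i) (inI j)).
  rewrite /th => /(mulIf _) e.
  have h4 : (4 * n)%:R^-1 != 0 :> R by rewrite invr_eq0 pnatr_eq0; lia.
  move: (e h4) => /(mulIf (negbT (gt_eqF pi0))) /eqP; rewrite eqr_nat => /eqP h.
  by apply: val_inj => /=; lia.
have sT : (size T <= n.+1)%N.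
  apply/leq_sizeP => j hj; rewrite coefD !coef_qp !bin_small ?mulr0 ?addr0 //; lia.
have Tn : T`_n = (- 4%:R) ^+ n.
  rewrite coefD !coef_qp.
  have -> : (n.+1 + n - 1 = 2 * n)%N by lia.
  by rewrite binn (@bin_small (n + n - 1)) ?mulr0 ?addr0 ?mulr1 //; lia.
have T0 : T`_n != 0 by rewrite Tn expf_neq0 // oppr_eq0 pnatr_eq0.
have := @key R n s T inj rT sT T0 k hk.
rewrite Tn coefD !coef_qp -mulrDr -natrD.
have -> : (n.+1 + (n - k) - 1 = 2 * n - k)%N by lia.
have -> : (n + (n - k) - 1 = 2 * n - k - 1)%N by lia.
have hX := @nat_id n k hn hk.
set X := ('C(2 * n - k, 2 * (n - k)) + 'C(2 * n - k - 1, 2 * (n - k)))%N in hX *.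
have hXR : X%:R * ((k`!)%:R * ((2 * n - 2 * k)`!)%:R) = (2 * n)%:R * ((2 * n - k - 1)`!)%:R :> R.
  by rewrite -!natrM hX.
have e4 : (- 4%:R) ^+ n = (- 4%:R) ^+ (n - k) * (- 4%:R) ^+ k :> R by rewrite -exprD subnK.
have nz : (- 4%:R) ^+ (n - k) != 0 :> R by rewrite expf_neq0 // oppr_eq0 pnatr_eq0.
move=> H; rewrite e4 -mulrA in H; have h := mulfI nz H.
have h' : X%:R = 4%:R ^+ k * elem_sym k s by rewrite h mulrA -exprMn mulrNN mulr1.
have n4 : 4%:R ^+ k != 0 :> R by rewrite expf_neq0 // pnatr_eq0.
have kf : (k`!)%:R != 0 :> R by rewrite pnatr_eq0 -lt0n fact_gt0.
have gf : ((2 * n - 2 * k)`!)%:R != 0 :> R by rewrite pnatr_eq0 -lt0n fact_gt0.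
apply: (mulfI n4); rewrite -h'.
apply: (mulIf (mulf_neq0 kf gf)); rewrite hXR.
field.
by rewrite n4 kf gf.
Qed.
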